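(* Let $A$ and $G$ be selfadjoint operators in the Hilbert space $\mathcal H$. Each of the following conditions implies that $\rho(AG)\neq\emptyset$ and $\rho(GA)\neq\emptyset$: (a) $G$ is bounded and $\rho(GA)\neq\emptyset$; (b) $G$ is boundedly invertible and $\rho(AG)\neq\emptyset$; (c) $(AG)^*=GA$ and $\rho(AG)\neq\emptyset$; (d) $\rho(AG)\neq\emptyset$, $GA$ is closed, and for some $\lambda\in\rho(AG)\setminus\{0\}$ the operator $G(AG-\lambda)^{-1}A$ is bounded on $\operatorname{dom}A$.
   Context: $(\mathcal H,(\cdot,\cdot))$ is a complex Hilbert space; $A,G$ are possibly unbounded selfadjoint operators, and $AG$, $GA$ denote the usual operator products with their natural domains. For a linear operator $S$, $\rho(S)$ is the set of $\lambda\in\mathbb C$ such that $S-\lambda$ is injective, $\operatorname{ran}(S-\lambda)=\mathcal H$ and $(S-\lambda)^{-1}$ is bounded and everywhere defined. $S$ is boundedly invertible if $0\in\rho(S)$. *)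

(* Defs.v *)
From Stdlib Require Import Reals.
Open Scope R_scope.

Record Cplx : Type := mkC { Re : R; Im : R }.
Definition C0 : Cplx := mkC 0 0.
Definition C1 : Cplx := mkC 1 0.
Definition Cadd (a b : Cplx) : Cplx := mkC (Re a + Re b) (Im a + Im b).
Definition Cmul (a b : Cplx) : Cplx :=
  mkC (Re a * Re b - Im a * Im b) (Re a * Im b + Im a * Re b).
Definition Cconj (a : Cplx) : Cplx := mkC (Re a) (- Im a).
Definition Copp (a : Cplx) : Cplx := mkC (- Re a) (- Im a).

(** * Complex Hilbert spaces
    Inner product linear in the first, conjugate-linear in the second argument. *)
Record HilbertSpace : Type := {
  carrier :> Type;
  hzero : carrier;
  hadd : carrier -> carrier -> carrier;
  hopp : carrier -> carrier;
  hscal : Cplx -> carrier -> carrier;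
  inner : carrier -> carrier -> Cplx;
  hadd_comm : forall x y, hadd x y = hadd y x;
  hadd_assoc : forall x y z, hadd x (hadd y z) = hadd (hadd x y) z;
  hadd_0 : forall x, hadd x hzero = x;
  hadd_opp : forall x, hadd x (hopp x) = hzero;
  hscal_1 : forall x, hscal C1 x = x;
  hscal_assoc : forall a b x, hscal a (hscal b x) = hscal (Cmul a b) x;
  hscal_distr_v : forall a x y, hscal a (hadd x y) = hadd (hscal a x) (hscal a y);
  hscal_distr_s : forall a b x, hscal (Cadd a b) x = hadd (hscal a x) (hscal b x);
  inner_add_l : forall x y z, inner (hadd x y) z = Cadd (inner x z) (inner y z);
  inner_scal_l : forall a x y, inner (hscal a x) y = Cmul a (inner x y);
  inner_conj_sym : forall x y, inner y x = Cconj (inner x y);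
  inner_pos : forall x, 0 <= Re (inner x x);
  inner_definite : forall x, inner x x = C0 -> x = hzero;
  complete : forall u : nat -> carrier,
    (forall eps, 0 < eps -> exists N, forall m n, (N <= m)%nat -> (N <= n)%nat ->
       sqrt (Re (inner (hadd (u m) (hopp (u n))) (hadd (u m) (hopp (u n))))) < eps) ->
    exists l, forall eps, 0 < eps -> exists N, forall n, (N <= n)%nat ->
       sqrt (Re (inner (hadd (u n) (hopp l)) (hadd (u n) (hopp l)))) < eps
}.

Arguments hzero {h}.
Arguments hadd {h}.
Arguments hopp {h}.
Arguments hscal {h}.
Arguments inner {h}.

Section Ops.
Variable H : HilbertSpace.

Definition hsub (x y : H) : H := hadd x (hopp y).
Definition hnorm (x : H) : R := sqrt (Re (inner x x)).

Definition converges (u : nat -> H) (l : H) : Prop :=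
  forall eps, 0 < eps -> exists N, forall n, (N <= n)%nat -> hnorm (hsub (u n) l) < eps.

(** Linear operators in H, represented by their graphs (relations). *)
Definition Op : Type := H -> H -> Prop.

Definition dom (T : Op) (x : H) : Prop := exists y, T x y.

Definition is_linop (T : Op) : Prop :=
  T hzero hzero /\
  (forall x1 y1 x2 y2, T x1 y1 -> T x2 y2 -> T (hadd x1 x2) (hadd y1 y2)) /\
  (forall a x y, T x y -> T (hscal a x) (hscal a y)) /\
  (forall x y1 y2, T x y1 -> T x y2 -> y1 = y2).

Definition dense (P : H -> Prop) : Prop :=
  forall x eps, 0 < eps -> exists y, P y /\ hnorm (hsub x y) < eps.

Definition adjoint (T : Op) : Op :=
  fun y z => forall x w, T x w -> inner w y = inner x z.

Definition op_eq (S T : Op) : Prop := forall x y, S x y <-> T x y.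

Definition selfadjoint (T : Op) : Prop :=
  is_linop T /\ dense (dom T) /\ op_eq (adjoint T) T.

Definition op_mul (S T : Op) : Op := fun x z => exists y, T x y /\ S y z.

Definition op_shift (S : Op) (lam : Cplx) : Op :=
  fun x y => exists w, S x w /\ y = hsub w (hscal lam x).

Definition op_inv (S : Op) : Op := fun x y => S y x.

Definition injective_op (S : Op) : Prop :=
  forall x1 x2 y, S x1 y -> S x2 y -> x1 = x2.

Definition surjective_op (S : Op) : Prop := forall y, exists x, S x y.

Definition bounded_op (S : Op) : Prop :=
  exists M, forall x y, S x y -> hnorm y <= M * hnorm x.

Definition closed_op (S : Op) : Prop :=
  forall (u v : nat -> H) x y,
    (forall n, S (u n) (v n)) -> converges u x -> converges v y -> S x y.

Definition in_resolvent (S : Op) (lam : Cplx) : Prop :=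
  injective_op (op_shift S lam) /\ surjective_op (op_shift S lam) /\
  bounded_op (op_inv (op_shift S lam)).

Definition resolvent_nonempty (S : Op) : Prop := exists lam, in_resolvent S lam.

Definition boundedly_invertible (S : Op) : Prop := in_resolvent S C0.

End Ops.

Arguments dom {H}.
Arguments is_linop {H}.
Arguments adjoint {H}.
Arguments op_eq {H}.
Arguments selfadjoint {H}.
Arguments op_mul {H}.
Arguments op_shift {H}.
Arguments op_inv {H}.
Arguments bounded_op {H}.
Arguments closed_op {H}.
Arguments in_resolvent {H}.
Arguments resolvent_nonempty {H}.
Arguments boundedly_invertible {H}.

(* Main.v *)
Require Import Defs.
From Stdlib Require Import Reals Lra Psatz Classical ClassicalEpsilon.
Require Import Defs.
Open Scope R_scope.

Arguments hsub {H}.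
Arguments hnorm {H}.
Arguments converges {H}.
Arguments dense {H}.
Arguments injective_op {H}.
Arguments surjective_op {H}.

Lemma Cext (a b : Cplx) : Re a = Re b -> Im a = Im b -> a = b.
Proof. destruct a, b; simpl; intros; subst; reflexivity. Qed.

Ltac Csimpl := unfold Cadd, Cmul, Cconj, Copp, C0, C1 in *; simpl in *.
Ltac Cring := apply Cext; Csimpl; ring.

Lemma hadd_0l {H : HilbertSpace} (x : H) : hadd hzero x = x.
Proof. rewrite hadd_comm; apply hadd_0. Qed.

Lemma inner_zero_l {H : HilbertSpace} (y : H) : inner hzero y = C0.
Proof.
  pose proof (inner_add_l H hzero hzero y) as E. rewrite hadd_0 in E.
  destruct (inner hzero y) as [a b]. unfold Cadd in E. injection E. intros.
  apply Cext; simpl; lra.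
Qed.

Lemma inner_opp_l {H : HilbertSpace} (x y : H) : inner (hopp x) y = Copp (inner x y).
Proof.
  pose proof (inner_add_l H x (hopp x) y) as E. rewrite hadd_opp, inner_zero_l in E.
  destruct (inner x y) as [a b]; destruct (inner (hopp x) y) as [c d].
  unfold Cadd, C0 in E. injection E; intros. apply Cext; simpl; lra.
Qed.

Lemma vec_ext {H : HilbertSpace} (x y : H) : (forall w, inner x w = inner y w) -> x = y.
Proof.
  intro Hw. set (d := hadd x (hopp y)).
  assert (Hd : d = hzero).
  { apply inner_definite. unfold d at 1. rewrite inner_add_l, inner_opp_l, Hw.
    Cring. }
  unfold d in Hd.
  rewrite <- (hadd_0 H y), <- Hd, (hadd_comm _ x (hopp y)), hadd_assoc, hadd_opp, hadd_0l.
  reflexivity.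
Qed.

Lemma inner_add_r {H : HilbertSpace} (x y z : H) : inner x (hadd y z) = Cadd (inner x y) (inner x z).
Proof.
  rewrite (inner_conj_sym H (hadd y z) x), inner_add_l,
    (inner_conj_sym H x y), (inner_conj_sym H x z). Cring.
Qed.

Lemma inner_scal_r {H : HilbertSpace} a (x y : H) : inner x (hscal a y) = Cmul (Cconj a) (inner x y).
Proof.
  rewrite (inner_conj_sym H (hscal a y) x), inner_scal_l, (inner_conj_sym H x y). Cring.
Qed.

Lemma inner_opp_r {H : HilbertSpace} (x y : H) : inner x (hopp y) = Copp (inner x y).
Proof.
  rewrite (inner_conj_sym H (hopp y) x), inner_opp_l, (inner_conj_sym H x y). Cring.
Qed.

Lemma inner_zero_r {H : HilbertSpace} (x : H) : inner x hzero = C0.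
Proof. rewrite (inner_conj_sym H hzero x), inner_zero_l. Cring. Qed.

Ltac inner_expand :=
  unfold hsub in *;
  repeat (rewrite ?inner_add_l, ?inner_scal_l, ?inner_opp_l, ?inner_zero_l,
                  ?inner_add_r, ?inner_scal_r, ?inner_opp_r, ?inner_zero_r).

Ltac inner_expand_in P :=
  unfold hsub in P;
  repeat (rewrite ?inner_add_l, ?inner_scal_l, ?inner_opp_l, ?inner_zero_l,
                  ?inner_add_r, ?inner_scal_r, ?inner_opp_r, ?inner_zero_r in P).

Ltac vec_eq := apply vec_ext; intro; inner_expand; Cring.

Definition nsq {H : HilbertSpace} (x : H) : R := Re (inner x x).

Lemma Im_self {H : HilbertSpace} (x : H) : Im (inner x x) = 0.
Proof.
  pose proof (inner_conj_sym H x x) as E.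
  destruct (inner x x) as [a b]. unfold Cconj in E. injection E. simpl. lra.
Qed.

Lemma nsq_nonneg {H : HilbertSpace} (x : H) : 0 <= nsq x.
Proof. apply inner_pos. Qed.

Lemma nsq_zero {H : HilbertSpace} (x : H) : nsq x = 0 -> x = hzero.
Proof.
  intro E. apply inner_definite. apply Cext; [exact E| apply Im_self].
Qed.

Lemma hnorm_sq {H : HilbertSpace} (x : H) : hnorm x * hnorm x = nsq x.
Proof. unfold hnorm. apply sqrt_sqrt. apply nsq_nonneg. Qed.

Lemma hnorm_nonneg {H : HilbertSpace} (x : H) : 0 <= hnorm x.
Proof. unfold hnorm. apply sqrt_pos. Qed.

Definition Cmod2 (c : Cplx) : R := Re c * Re c + Im c * Im c.

Lemma CS {H : HilbertSpace} (x y : H) : Cmod2 (inner x y) <= nsq x * nsq y.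
Proof.
  destruct (Req_dec (nsq y) 0) as [E|E].
  - apply nsq_zero in E. subst y. rewrite inner_zero_r. unfold Cmod2, nsq. Csimpl.
    rewrite inner_zero_r. Csimpl. lra.
  - assert (Hn : 0 < nsq y) by (pose proof (nsq_nonneg y); lra).
    set (v := hsub (hscal (mkC (nsq y) 0) x) (hscal (inner x y) y)).
    pose proof (nsq_nonneg v) as P. unfold nsq, v in P. inner_expand_in P.
    rewrite (inner_conj_sym H x y) in P.
    pose proof (Im_self x). pose proof (Im_self y).
    unfold nsq, Cmod2 in *.
    destruct (inner x y) as [a b]; destruct (inner x x) as [c d];
    destruct (inner y y) as [e f]. Csimpl. subst d f.
    assert (0 <= e * (e * c - (a*a+b*b))) by nra.
    assert (0 <= e * c - (a*a+b*b)) by nra. nra.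
Qed.

Lemma Re_inner_le {H : HilbertSpace} (x y : H) : Rabs (Re (inner x y)) <= hnorm x * hnorm y.
Proof.
  pose proof (CS x y) as C. unfold Cmod2 in C.
  pose proof (hnorm_sq x) as X. pose proof (hnorm_sq y) as Y.
  pose proof (hnorm_nonneg x). pose proof (hnorm_nonneg y).
  assert (Re (inner x y) * Re (inner x y) <= (hnorm x * hnorm y) * (hnorm x * hnorm y)).
  { replace ((hnorm x * hnorm y) * (hnorm x * hnorm y)) with ((hnorm x * hnorm x) * (hnorm y * hnorm y)) by ring.
    rewrite X, Y. nra. }
  assert (0 <= hnorm x * hnorm y) by nra.
  apply Rabs_le. split; nra.
Qed.

Lemma Cmod2_inner_le {H : HilbertSpace} (x y : H) : Cmod2 (inner x y) <= (hnorm x * hnorm y) * (hnorm x * hnorm y).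
Proof.
  pose proof (CS x y). pose proof (hnorm_sq x). pose proof (hnorm_sq y).
  replace ((hnorm x * hnorm y) * (hnorm x * hnorm y)) with ((hnorm x * hnorm x) * (hnorm y * hnorm y)) by ring.
  rewrite H1, H2. assumption.
Qed.

Lemma nsq_add {H : HilbertSpace} (x y : H) : nsq (hadd x y) = nsq x + nsq y + 2 * Re (inner x y).
Proof.
  unfold nsq. inner_expand. rewrite (inner_conj_sym H x y). Csimpl. ring.
Qed.

Lemma sqrt_le_of_sq (s p : R) : 0 <= s -> 0 <= p -> s <= p * p -> sqrt s <= p.
Proof.
  intros. rewrite <- (sqrt_square p) by assumption. apply sqrt_le_1_alt. assumption.
Qed.

Lemma hnorm_triangle {H : HilbertSpace} (x y : H) : hnorm (hadd x y) <= hnorm x + hnorm y.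
Proof.
  unfold hnorm at 1. apply sqrt_le_of_sq.
  - apply nsq_nonneg.
  - pose proof (hnorm_nonneg x). pose proof (hnorm_nonneg y). lra.
  - change (nsq (hadd x y) <= (hnorm x + hnorm y) * (hnorm x + hnorm y)). rewrite nsq_add. pose proof (Re_inner_le x y). pose proof (hnorm_sq x). pose proof (hnorm_sq y).
    pose proof (Rle_abs (Re (inner x y))). nra.
Qed.

Lemma nsq_scal {H : HilbertSpace} a (x : H) : nsq (hscal a x) = Cmod2 a * nsq x.
Proof. unfold nsq, Cmod2. inner_expand. pose proof (Im_self x). Csimpl. rewrite H0. ring. Qed.

Lemma hnorm_scal {H : HilbertSpace} a (x : H) : hnorm (hscal a x) = sqrt (Cmod2 a) * hnorm x.
Proof.
  unfold hnorm. change (sqrt (nsq (hscal a x)) = sqrt (Cmod2 a) * sqrt (nsq x)). rewrite nsq_scal. apply sqrt_mult.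
  unfold Cmod2; nra. apply nsq_nonneg.
Qed.

Lemma hnorm_sub_sym {H : HilbertSpace} (x y : H) : hnorm (hsub x y) = hnorm (hsub y x).
Proof.
  replace (hsub y x) with (hscal (mkC (-1) 0) (hsub x y)) by vec_eq.
  rewrite hnorm_scal. unfold Cmod2; simpl. replace (-1 * -1 + 0 * 0) with 1 by ring.
  rewrite sqrt_1. ring.
Qed.

Lemma hnorm_zero {H : HilbertSpace} : hnorm (@hzero H) = 0.
Proof. unfold hnorm. rewrite inner_zero_l. simpl. apply sqrt_0. Qed.

Lemma hnorm_eq0 {H : HilbertSpace} (x : H) : hnorm x = 0 -> x = hzero.
Proof. intro E. apply nsq_zero. rewrite <- hnorm_sq, E. ring. Qed.


Lemma fun_choice {A B : Type} (P : A -> B -> Prop) :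
  (forall a, exists b, P a b) -> exists g : A -> B, forall a, P a (g a).
Proof.
  intro Hx. exists (fun a => proj1_sig (constructive_indefinite_description _ (Hx a))).
  intro a. exact (proj2_sig (constructive_indefinite_description _ (Hx a))).
Qed.

Lemma small_inv (K eps : R) : 0 <= K -> 0 < eps ->
  exists N, forall n, (N <= n)%nat -> K / (INR n + 1) < eps.
Proof.
  intros HK He. destruct (INR_archimed eps K He) as [N HN]. exists N. intros n Hn.
  apply le_INR in Hn. pose proof (pos_INR N).
  apply Rmult_lt_reg_r with (INR n + 1). lra.
  unfold Rdiv. rewrite Rmult_assoc, Rinv_l by lra. nra.
Qed.

Lemma small_sq (C eps : R) : 0 <= C -> 0 < eps ->
  exists d, 0 < d /\ forall t, 0 <= t -> t < d -> C * (t * t) < eps.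
Proof.
  intros HC He. exists (Rmin 1 (eps / (C + 1))). split.
  - apply Rmin_pos. lra. apply Rdiv_lt_0_compat; lra.
  - intros t Ht Htd. pose proof (Rmin_l 1 (eps / (C+1))). pose proof (Rmin_r 1 (eps / (C+1))).
    assert (t < eps / (C+1)) by lra.
    assert (t * (C + 1) < eps).
    { apply Rmult_lt_reg_r with (/ (C+1)). apply Rinv_0_lt_compat; lra.
      rewrite Rmult_assoc, Rinv_r by lra. unfold Rdiv in *. lra. }
    nra.
Qed.

Lemma complete' {H : HilbertSpace} (u : nat -> H) :
  (forall eps, 0 < eps -> exists N, forall m n, (N <= m)%nat -> (N <= n)%nat ->
     hnorm (hsub (u m) (u n)) < eps) -> exists l, converges u l.
Proof. intro Hc. exact (complete H u Hc). Qed.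

Lemma cauchy_K {H : HilbertSpace} (u : nat -> H) (K : R) : 0 <= K ->
  (forall m n, hnorm (hsub (u m) (u n)) <= K / (INR m + 1) + K / (INR n + 1)) ->
  exists l, converges u l.
Proof.
  intros HK Hb. apply complete'. intros eps He.
  destruct (small_inv K (eps/2) HK) as [N HN]. lra.
  exists N. intros m n Hm Hn. pose proof (Hb m n). pose proof (HN m Hm). pose proof (HN n Hn). lra.
Qed.

Lemma eventually_and (P Q : nat -> Prop) :
  (exists N, forall n, (N <= n)%nat -> P n) -> (exists N, forall n, (N <= n)%nat -> Q n) ->
  exists N, forall n, (N <= n)%nat -> P n /\ Q n.
Proof.
  intros [N1 H1] [N2 H2]. exists (Nat.max N1 N2). intros n Hn. split.
  apply H1. lia. apply H2. lia.
Qed.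

Lemma le_of_forall_eps (a b : R) : (forall eps, 0 < eps -> a < b + eps) -> a <= b.
Proof.
  intro Hf. destruct (Rle_dec a b) as [h|h]. exact h.
  exfalso. specialize (Hf ((a - b)/2)). lra.
Qed.

Lemma Cmod2_zero (c : Cplx) : Cmod2 c <= 0 -> c = C0.
Proof. unfold Cmod2. intro Hm. destruct c as [a b]. simpl in *. apply Cext; simpl; nra. Qed.

Lemma Cmod2_eq (a b : Cplx) : Cmod2 (Cadd a (Copp b)) <= 0 -> a = b.
Proof. unfold Cmod2. intro Hm. destruct a as [a1 a2], b as [b1 b2]. Csimpl. pose proof (Rle_0_sqr (a1 + - b1)). pose proof (Rle_0_sqr (a2 + - b2)). unfold Rsqr in *. apply Cext; simpl; apply Rle_antisym; nra. Qed.

Lemma Cmod2_nonneg (c : Cplx) : 0 <= Cmod2 c.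
Proof. unfold Cmod2. nra. Qed.

Lemma riesz {H : HilbertSpace} (f : H -> Cplx) (K : R) :
  (forall x y, f (hadd x y) = Cadd (f x) (f y)) ->
  (forall a x, f (hscal a x) = Cmul a (f x)) ->
  (forall x, Cmod2 (f x) <= K * nsq x) ->
  exists w, forall u, f u = inner u w.
Proof.
  intros fadd fscal fbd.
  assert (f0 : f hzero = C0).
  { pose proof (fadd hzero hzero) as E. rewrite hadd_0 in E.
    destruct (f hzero) as [a b]. unfold Cadd in E. injection E. intros. apply Cext; simpl; lra. }
  assert (fsub : forall x y, f (hsub x y) = Cadd (f x) (Copp (f y))).
  { intros x y. replace (hsub x y) with (hadd x (hscal (mkC (-1) 0) y)) by vec_eq.
    rewrite fadd, fscal. Cring. }
  destruct (classic (forall u, f u = C0)) as [Hall|Hex].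
  { exists hzero. intro u. rewrite Hall, inner_zero_r. reflexivity. }
  apply not_all_ex_not in Hex. destruct Hex as [x0 Hx0].
  set (c := f x0) in *.
  assert (Hc : 0 < Cmod2 c).
  { destruct (Rlt_dec 0 (Cmod2 c)) as [h|h]. exact h. exfalso. apply Hx0. apply Cmod2_zero. lra. }
  set (e := hscal (mkC (Re c / Cmod2 c) (- Im c / Cmod2 c)) x0).
  assert (Hfe : f e = C1).
  { unfold e. rewrite fscal. fold c. unfold Cmod2 in *. apply Cext; Csimpl; field; lra. }
  set (D := fun r => exists v, f v = C1 /\ r = - nsq v).
  destruct (completeness D) as [m [Hub Hlub]].
  { exists 0. intros r [v [_ ->]]. pose proof (nsq_nonneg v). lra. }
  { exists (- nsq e). exists e. auto. }
  set (d2 := - m).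
  assert (P1 : forall v, f v = C1 -> d2 <= nsq v).
  { intros v Hv. unfold d2. assert (D (- nsq v)) by (exists v; auto). specialize (Hub _ H0). lra. }
  assert (P2 : forall eps, 0 < eps -> exists v, f v = C1 /\ nsq v < d2 + eps).
  { intros eps He. apply NNPP. intro Hn.
    assert (Hb : is_upper_bound D (m - eps)).
    { intros r [v [Hv ->]]. destruct (Rle_dec (- nsq v) (m - eps)) as [h|h]. exact h.
      exfalso. apply Hn. exists v. split. exact Hv. unfold d2. lra. }
    specialize (Hlub _ Hb). lra. }
  assert (Hd2 : 0 <= d2).
  { unfold d2. assert (m <= 0); [|lra]. apply Hlub. intros r [v [_ ->]].
    pose proof (nsq_nonneg v). lra. }
  assert (Hseq : forall n : nat, exists v, f v = C1 /\ nsq v < d2 + / ((INR n + 1) * (INR n + 1))).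
  { intro n. apply P2. pose proof (pos_INR n). apply Rinv_0_lt_compat. nra. }
  apply fun_choice in Hseq. destruct Hseq as [vs Hvs].
  assert (par : forall x y : H, nsq (hsub x y) + nsq (hadd x y) = 2 * nsq x + 2 * nsq y).
  { intros x y. unfold nsq. inner_expand. rewrite (inner_conj_sym H x y). Csimpl. ring. }
  assert (Hcau : forall p q, hnorm (hsub (vs p) (vs q)) <= 2 / (INR p + 1) + 2 / (INR q + 1)).
  { intros p q. destruct (Hvs p) as [fp np]. destruct (Hvs q) as [fq nq].
    set (mid := hscal (mkC (1/2) 0) (hadd (vs p) (vs q))).
    assert (fm : f mid = C1). { unfold mid. rewrite fscal, fadd, fp, fq. apply Cext; Csimpl; field. }
    specialize (P1 _ fm). unfold mid in P1. rewrite nsq_scal in P1. unfold Cmod2 in P1; simpl in P1.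
    pose proof (par (vs p) (vs q)).
    pose proof (pos_INR p). pose proof (pos_INR q).
    unfold hnorm. apply sqrt_le_of_sq. apply nsq_nonneg.
    apply Rplus_le_le_0_compat; apply Rlt_le, Rdiv_lt_0_compat; lra.
    assert (Ha : 0 < INR p + 1) by lra. assert (Hb : 0 < INR q + 1) by lra.
    set (a := INR p + 1) in *. set (b := INR q + 1) in *.
    assert (/ (a * a) = (1/a) * (1/a)) by (field; apply Rgt_not_eq; nra).
    assert (/ (b * b) = (1/b) * (1/b)) by (field; apply Rgt_not_eq; nra).
    assert (2 / a = 2 * (1/a)) by (field; apply Rgt_not_eq; nra). assert (2 / b = 2 * (1/b)) by (field; apply Rgt_not_eq; nra).
    assert (0 < 1/a) by (apply Rdiv_lt_0_compat; lra). assert (0 < 1/b) by (apply Rdiv_lt_0_compat; lra).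
    change (nsq (hsub (vs p) (vs q)) <= (2 / a + 2 / b) * (2 / a + 2 / b)).
    nra. }
  destruct (cauchy_K vs 2 ltac:(lra) Hcau) as [w0 Hw0].
  assert (Hfw0 : f w0 = C1).
  { apply Cmod2_eq. apply le_of_forall_eps. intros eps He. rewrite Rplus_0_l.
    destruct (small_sq (Rabs K) eps (Rabs_pos K) He) as [dl [Hdl Hdl2]].
    destruct (Hw0 dl Hdl) as [N HN]. specialize (HN N (le_n N)).
    pose proof (fbd (hsub w0 (vs N))) as B. rewrite fsub in B. destruct (Hvs N) as [fN _].
    rewrite fN in B. rewrite hnorm_sub_sym in HN.
    specialize (Hdl2 _ (hnorm_nonneg _) HN). rewrite hnorm_sq in Hdl2.
    pose proof (Rle_abs K). pose proof (nsq_nonneg (hsub w0 (vs N))).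
    assert (K * nsq (hsub w0 (vs N)) <= Rabs K * nsq (hsub w0 (vs N))) by nra.
    lra. }
  assert (Hmin : nsq w0 <= d2).
  { apply le_of_forall_eps. intros eps He.
    set (h := hnorm w0).
    assert (Hh : 0 <= h) by apply hnorm_nonneg.
    set (q := eps / (4 * (h + 1))).
    assert (Hqp : 0 < q) by (unfold q; apply Rdiv_lt_0_compat; lra).
    assert (Hhq : h * q <= eps / 4).
    { unfold q. replace (h * (eps / (4 * (h + 1)))) with ((eps / 4) * (h / (h + 1))) by (field; lra).
      assert (h / (h + 1) <= 1).
      { apply Rmult_le_reg_r with (h + 1). lra. unfold Rdiv. rewrite Rmult_assoc, Rinv_l by lra. lra. }
      assert (0 < eps / 4) by lra. nra. }
    destruct (eventually_and _ _ (Hw0 q Hqp) (small_inv 1 (eps/2) ltac:(lra) ltac:(lra))) as [N HN].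
    destruct (HN N (le_n N)) as [Hr Hi].
    destruct (Hvs N) as [_ HvN].
    set (r := hnorm (hsub (vs N) w0)) in *.
    assert (Hr0 : 0 <= r) by apply hnorm_nonneg.
    assert (Htri : h <= hnorm (vs N) + r).
    { unfold h, r. rewrite hnorm_sub_sym.
      replace w0 with (hadd (vs N) (hsub w0 (vs N))) at 1 by vec_eq. apply hnorm_triangle. }
    pose proof (pos_INR N).
    assert (Hinv : / ((INR N + 1) * (INR N + 1)) <= 1 / (INR N + 1)).
    { unfold Rdiv. rewrite Rmult_1_l. apply Rinv_le_contravar. lra. nra. }
    pose proof (hnorm_sq (vs N)) as HvsN. pose proof (hnorm_nonneg (vs N)).
    pose proof (hnorm_sq w0) as Hw. fold h in Hw.
    destruct (Rle_dec h r) as [Hle|Hgt].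
    - assert (h * h <= h * r) by nra. assert (h * r <= h * q) by nra. lra.
    - assert (0 <= h - r) by lra.
      assert ((h - r) * (h - r) <= hnorm (vs N) * hnorm (vs N)) by nra.
      assert (h * r <= h * q) by nra. nra. }
  assert (Hmin' : forall v, f v = C1 -> nsq w0 <= nsq v).
  { intros v Hv. specialize (P1 v Hv). lra. }
  assert (Hperp : forall k, f k = C0 -> inner w0 k = C0).
  { intros k Hk. set (cc := inner w0 k).
    set (nk := nsq k). assert (Hnk : 0 <= nk) by apply nsq_nonneg.
    set (sc := 1 / (nk + 1)).
    assert (Hs : 0 < sc) by (unfold sc; apply Rdiv_lt_0_compat; lra).
    assert (Hsn : sc * nk < 1).
    { unfold sc. apply Rmult_lt_reg_r with (nk + 1). lra.
      replace (1 / (nk + 1) * nk * (nk + 1)) with nk by (field; lra). lra. }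
    set (v := hsub w0 (hscal (Cmul (mkC sc 0) cc) k)).
    assert (Hfv : f v = C1).
    { unfold v. rewrite fsub, fscal, Hk, Hfw0. Cring. }
    specialize (Hmin' v Hfv).
    assert (Ev : nsq v = nsq w0 - 2 * sc * Cmod2 cc + sc * sc * Cmod2 cc * nk).
    { unfold v, nk, nsq, Cmod2, cc. clearbody sc. inner_expand. rewrite (inner_conj_sym H w0 k).
      pose proof (Im_self k) as I1. pose proof (Im_self w0) as I2.
      destruct (inner w0 k) as [c1 c2]. destruct (inner k k) as [k1 k2].
      destruct (inner w0 w0) as [w1 w2]. Csimpl. rewrite I1. ring. }
    pose proof (Cmod2_nonneg c).
    assert (Z : sc * (sc * nk - 2) < 0) by nra.
    assert (0 <= Cmod2 cc * (sc * (sc * nk - 2))) by nra.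
    apply Cmod2_zero. nra. }
  assert (Hn0 : 0 < nsq w0).
  { destruct (Rlt_dec 0 (nsq w0)) as [h|h]. exact h. exfalso.
    assert (nsq w0 = 0) by (pose proof (nsq_nonneg w0); lra).
    apply nsq_zero in H0. rewrite H0, f0 in Hfw0. unfold C0, C1 in Hfw0. injection Hfw0. lra. }
  exists (hscal (mkC (1 / nsq w0) 0) w0). intro u.
  assert (Hk : f (hsub u (hscal (f u) w0)) = C0).
  { rewrite fsub, fscal, Hfw0. Cring. }
  specialize (Hperp _ Hk). inner_expand_in Hperp. inner_expand.
  rewrite (inner_conj_sym H w0 u).
  pose proof (Im_self w0) as I2. unfold nsq in *.
  destruct (inner w0 u) as [p1 p2]. destruct (f u) as [a1 a2]. destruct (inner w0 w0) as [n1 n2].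
  simpl in *. subst n2. Csimpl. injection Hperp. intros E1 E2.
  apply Cext; simpl.
  - replace p1 with (a1 * n1) by lra. field. lra.
  - replace p2 with (- a2 * n1) by lra. field. lra.
Qed.


Lemma hnorm_sub_le {H : HilbertSpace} (a b : H) : hnorm (hsub a b) <= hnorm a + hnorm b.
Proof.
  replace (hsub a b) with (hadd a (hscal (mkC (-1) 0) b)) by vec_eq.
  eapply Rle_trans. apply hnorm_triangle. rewrite hnorm_scal. unfold Cmod2; simpl.
  replace (-1 * -1 + 0 * 0) with 1 by ring. rewrite sqrt_1. lra.
Qed.

Lemma hnorm_sub_tri {H : HilbertSpace} (a b c : H) : hnorm (hsub a c) <= hnorm (hsub a b) + hnorm (hsub b c).
Proof.
  replace (hsub a c) with (hadd (hsub a b) (hsub b c)) by vec_eq. apply hnorm_triangle.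
Qed.

Lemma dense_seq {H : HilbertSpace} (P : H -> Prop) (y : H) : dense P ->
  exists xs : nat -> H, (forall n, P (xs n)) /\ (forall n, hnorm (hsub y (xs n)) < 1 / (INR n + 1)).
Proof.
  intro D.
  assert (forall n : nat, exists x, P x /\ hnorm (hsub y x) < 1 / (INR n + 1)).
  { intro n. apply D. pose proof (pos_INR n). apply Rdiv_lt_0_compat; lra. }
  apply fun_choice in H0. destruct H0 as [xs Hxs]. exists xs. split; intro n; apply Hxs.
Qed.

Lemma seq_conv {H : HilbertSpace} (xs : nat -> H) (y : H) :
  (forall n, hnorm (hsub y (xs n)) < 1 / (INR n + 1)) -> converges xs y.
Proof.
  intros Hx eps He. destruct (small_inv 1 eps ltac:(lra) He) as [N HN]. exists N. intros n Hn.
  rewrite hnorm_sub_sym. specialize (Hx n). specialize (HN n Hn). lra.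
Qed.

Lemma seq_cauchy_bound {H : HilbertSpace} (xs : nat -> H) (y : H) :
  (forall n, hnorm (hsub y (xs n)) < 1 / (INR n + 1)) ->
  forall m n, hnorm (hsub (xs m) (xs n)) <= 1 / (INR m + 1) + 1 / (INR n + 1).
Proof.
  intros Hx m n. eapply Rle_trans. apply (hnorm_sub_tri _ y). rewrite hnorm_sub_sym.
  pose proof (Hx m). pose proof (Hx n). lra.
Qed.

Lemma conv_add {H : HilbertSpace} (u v : nat -> H) a b :
  converges u a -> converges v b -> converges (fun n => hadd (u n) (v n)) (hadd a b).
Proof.
  intros Hu Hv eps He. destruct (eventually_and _ _ (Hu (eps/2) ltac:(lra)) (Hv (eps/2) ltac:(lra))) as [N HN].
  exists N. intros n Hn. destruct (HN n Hn).
  replace (hsub (hadd (u n) (v n)) (hadd a b)) with (hadd (hsub (u n) a) (hsub (v n) b)) by vec_eq.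
  eapply Rle_lt_trans. apply hnorm_triangle. lra.
Qed.

Lemma conv_scal {H : HilbertSpace} (u : nat -> H) a c :
  converges u a -> converges (fun n => hscal c (u n)) (hscal c a).
Proof.
  intros Hu eps He. set (k := sqrt (Cmod2 c)). assert (Hk : 0 <= k) by apply sqrt_pos.
  destruct (Hu (eps / (k + 1))) as [N HN]. apply Rdiv_lt_0_compat; lra.
  exists N. intros n Hn. specialize (HN n Hn).
  replace (hsub (hscal c (u n)) (hscal c a)) with (hscal c (hsub (u n) a)) by vec_eq.
  rewrite hnorm_scal. fold k. pose proof (hnorm_nonneg (hsub (u n) a)).
  assert (hnorm (hsub (u n) a) * (k + 1) < eps).
  { apply Rmult_lt_reg_r with (/ (k+1)). apply Rinv_0_lt_compat; lra.
    rewrite Rmult_assoc, Rinv_r by lra. unfold Rdiv in HN. lra. }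
  nra.
Qed.

Definition Ccv (a : nat -> Cplx) (l : Cplx) : Prop :=
  forall eps, 0 < eps -> exists N, forall n, (N <= n)%nat -> Cmod2 (Cadd (a n) (Copp l)) < eps.

Lemma Ccv_eq (a b : nat -> Cplx) la lb : Ccv a la -> Ccv b lb -> (forall n, a n = b n) -> la = lb.
Proof.
  intros Ha Hb Hab. apply Cmod2_eq. apply le_of_forall_eps. intros eps He. rewrite Rplus_0_l.
  destruct (eventually_and _ _ (Ha (eps/4) ltac:(lra)) (Hb (eps/4) ltac:(lra))) as [N HN].
  destruct (HN N (le_n N)) as [A1 B1]. rewrite Hab in A1.
  unfold Cmod2 in *. destruct (b N) as [p q]. destruct la as [l1 l2]. destruct lb as [m1 m2]. Csimpl.
  pose proof (Rle_0_sqr (p - l1 + (p - m1))). pose proof (Rle_0_sqr (q - l2 + (q - m2))).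
  unfold Rsqr in *. nra.
Qed.

Lemma inner_cv_r {H : HilbertSpace} (u : nat -> H) l (t : H) :
  converges u l -> Ccv (fun n => inner t (u n)) (inner t l).
Proof.
  intros Hu eps He.
  destruct (small_sq (nsq t) eps (nsq_nonneg t) He) as [d [Hd Hd2]].
  destruct (Hu d Hd) as [N HN]. exists N. intros n Hn.
  replace (Cadd (inner t (u n)) (Copp (inner t l))) with (inner t (hsub (u n) l)) by (inner_expand; Cring).
  eapply Rle_lt_trans. apply CS. rewrite <- (hnorm_sq (hsub (u n) l)).
  apply Hd2. apply hnorm_nonneg. apply HN. exact Hn.
Qed.

Lemma vec_ext_r {H : HilbertSpace} (x y : H) : (forall w, inner w x = inner w y) -> x = y.
Proof.
  intro Hw. apply vec_ext. intro w. rewrite (inner_conj_sym H w x), (inner_conj_sym H w y), Hw. reflexivity.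
Qed.



Lemma lin_add {H : HilbertSpace} (T : Op H) x1 y1 x2 y2 : is_linop T ->
  T x1 y1 -> T x2 y2 -> T (hadd x1 x2) (hadd y1 y2).
Proof. intros [_ [h _]]. apply h. Qed.

Lemma lin_scal {H : HilbertSpace} (T : Op H) a x y : is_linop T -> T x y -> T (hscal a x) (hscal a y).
Proof. intros [_ [_ [h _]]]. apply h. Qed.

Lemma lin_fun {H : HilbertSpace} (T : Op H) x y1 y2 : is_linop T -> T x y1 -> T x y2 -> y1 = y2.
Proof. intros [_ [_ [_ h]]]. apply h. Qed.

Lemma lin_zero {H : HilbertSpace} (T : Op H) : is_linop T -> T hzero hzero.
Proof. intros [h _]. exact h. Qed.

Lemma lin_sub {H : HilbertSpace} (T : Op H) x1 y1 x2 y2 : is_linop T ->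
  T x1 y1 -> T x2 y2 -> T (hsub x1 x2) (hsub y1 y2).
Proof.
  intros L h1 h2. replace (hsub x1 x2) with (hadd x1 (hscal (mkC (-1) 0) x2)) by vec_eq.
  replace (hsub y1 y2) with (hadd y1 (hscal (mkC (-1) 0) y2)) by vec_eq.
  apply lin_add; auto. apply lin_scal; auto.
Qed.

Lemma sa_sym {H : HilbertSpace} (T : Op H) x u y v : selfadjoint T -> T x u -> T y v ->
  inner u y = inner x v.
Proof.
  intros [_ [_ E]] h1 h2. apply E in h2. exact (h2 x u h1).
Qed.

Lemma sa_adj {H : HilbertSpace} (T : Op H) y z : selfadjoint T -> adjoint T y z -> T y z.
Proof. intros [_ [_ E]] h. apply E. exact h. Qed.

Lemma linop_mul {H : HilbertSpace} (S T : Op H) : is_linop S -> is_linop T -> is_linop (op_mul S T).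
Proof.
  intros LS LT. split; [|split; [|split]].
  - exists hzero. split; apply lin_zero; auto.
  - intros x1 y1 x2 y2 [m1 [a1 b1]] [m2 [a2 b2]]. exists (hadd m1 m2).
    split; apply lin_add; eauto.
  - intros a x y [m [h1 h2]]. exists (hscal a m). split; apply lin_scal; eauto.
  - intros x y1 y2 [m1 [a1 b1]] [m2 [a2 b2]].
    assert (m1 = m2) by (apply (lin_fun T x); auto). subst. apply (lin_fun S m2); auto.
Qed.

Lemma linop_shift {H : HilbertSpace} (T : Op H) lam : is_linop T -> is_linop (op_shift T lam).
Proof.
  intros LT. split; [|split; [|split]].
  - exists hzero. split. apply lin_zero; auto. vec_eq.
  - intros x1 y1 x2 y2 [w1 [a1 ->]] [w2 [a2 ->]]. exists (hadd w1 w2).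
    split. apply lin_add; auto. vec_eq.
  - intros a x y [w [h ->]]. exists (hscal a w). split. apply lin_scal; auto. vec_eq.
  - intros x y1 y2 [w1 [a1 ->]] [w2 [a2 ->]]. assert (w1 = w2) by (eapply lin_fun; eauto). subst. reflexivity.
Qed.

Lemma resolvent_eq {H : HilbertSpace} (S T : Op H) lam : op_eq S T -> in_resolvent S lam -> in_resolvent T lam.
Proof.
  intros E. assert (E2 : forall x y, op_shift S lam x y <-> op_shift T lam x y).
  { intros x y. split; intros [w [h1 h2]]; exists w; split; auto; apply E; auto. }
  intros [I [Su [M B]]]. split; [|split].
  - intros x1 x2 y h1 h2. apply E2 in h1. apply E2 in h2. eapply I; eauto.
  - intro y. destruct (Su y) as [x h]. exists x. apply E2. auto.
  - exists M. intros x y h. apply B. unfold op_inv in *. apply E2. auto.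
Qed.

Lemma resolvent_adjoint {H : HilbertSpace} (T : Op H) lam : is_linop T -> in_resolvent T lam ->
  in_resolvent (adjoint T) (Cconj lam).
Proof.
  intros LT [Inj [Sur [M Bd]]].
  set (S := op_shift T lam) in *.
  assert (LS : is_linop S) by (apply linop_shift; auto).
  destruct (fun_choice _ Sur) as [b Hb].
  assert (bx : forall x y, S x y -> b y = x).
  { intros x y h. eapply Inj. apply Hb. exact h. }
  assert (badd : forall x y, b (hadd x y) = hadd (b x) (b y)).
  { intros x y. apply bx. apply lin_add; auto. }
  assert (bscal : forall a x, b (hscal a x) = hscal a (b x)).
  { intros a x. apply bx. apply lin_scal; auto. }
  assert (bbd : forall y, hnorm (b y) <= M * hnorm y).
  { intro y. apply Bd. apply Hb. }
  assert (Key : forall w z, op_shift (adjoint T) (Cconj lam) w z -> forall u, inner u w = inner (b u) z).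
  { intros w z [w' [Ha ->]] u. destruct (Hb u) as [v [Tv Eu]].
    rewrite Eu at 1. specialize (Ha _ _ Tv). inner_expand. rewrite Ha. Cring. }
  split; [|split].
  - intros w1 w2 z h1 h2. apply vec_ext_r. intro u. rewrite (Key _ _ h1), (Key _ _ h2). reflexivity.
  - intro z.
    destruct (riesz (fun u => inner (b u) z) (M * M * nsq z)) as [w Hw].
    + intros x y. simpl. rewrite badd. apply inner_add_l.
    + intros a x. simpl. rewrite bscal. apply inner_scal_l.
    + intro x. eapply Rle_trans. apply CS.
      pose proof (bbd x). pose proof (hnorm_nonneg (b x)). pose proof (hnorm_sq (b x)).
      pose proof (hnorm_sq x). pose proof (nsq_nonneg z).
      assert (nsq (b x) <= M * M * nsq x) by nra. nra.
    + exists w. exists (hadd z (hscal (Cconj lam) w)). split.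
      * intros x v Tv. 
        assert (E : b (hsub v (hscal lam x)) = x) by (apply bx; exists v; auto).
        pose proof (Hw (hsub v (hscal lam x))) as R. simpl in R. rewrite E in R.
        inner_expand_in R. inner_expand. rewrite R. Cring.
      * vec_eq.
  - exists (Rabs M). intros z w h. unfold op_inv in h.
    pose proof (Key _ _ h w) as K. 
    assert (Hn : nsq w <= Rabs M * hnorm w * hnorm z).
    { unfold nsq. rewrite K. eapply Rle_trans. apply Rle_abs. eapply Rle_trans. apply Re_inner_le.
      pose proof (bbd w). pose proof (Rle_abs M). pose proof (hnorm_nonneg w). pose proof (hnorm_nonneg z).
      pose proof (hnorm_nonneg (b w)).
      assert (hnorm (b w) <= Rabs M * hnorm w) by nra.
      replace (Rabs M * hnorm w * hnorm z) with ((Rabs M * hnorm w) * hnorm z) by ring.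
      apply Rmult_le_compat_r; lra. }
    rewrite <- hnorm_sq in Hn. pose proof (hnorm_nonneg w). pose proof (hnorm_nonneg z).
    pose proof (Rabs_pos M).
    destruct (Req_dec (hnorm w) 0) as [Z|Z]. rewrite Z. nra.
    assert (0 < hnorm w) by lra.
    apply Rmult_le_reg_l with (hnorm w). lra. nra.
Qed.


Lemma adj_GA_sub {H : HilbertSpace} (A G : Op H) y z : selfadjoint A -> selfadjoint G ->
  op_mul G A y z -> adjoint (op_mul A G) y z.
Proof.
  intros SA SG [u [Ay Gu]] x w [t [Gx At]].
  rewrite (sa_sym A t w y u SA At Ay). exact (sa_sym G x t u z SG Gx Gu).
Qed.

Lemma case_b_eq {H : HilbertSpace} (A G : Op H) : selfadjoint A -> selfadjoint G ->
  boundedly_invertible G -> op_eq (adjoint (op_mul A G)) (op_mul G A).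
Proof.
  intros SA SG [_ [Sur _]].
  assert (gs : forall v, exists x, G x v).
  { intro v. destruct (Sur v) as [x [w [Gw ->]]]. exists x.
    replace (hsub w (hscal C0 x)) with w by vec_eq. exact Gw. }
  intros y z. split.
  - intro adj. destruct (gs z) as [g Gg]. exists g. split; [|exact Gg].
    apply (sa_adj A); auto. intros t w Atw. destruct (gs t) as [x Gx].
    rewrite (adj x w (ex_intro _ t (conj Gx Atw))). symmetry. exact (sa_sym G x t g z SG Gx Gg).
  - apply adj_GA_sub; auto.
Qed.

Lemma bounded_total {H : HilbertSpace} (G : Op H) : selfadjoint G -> bounded_op G -> forall y, dom G y.
Proof.
  intros SG [M Bd] y. pose proof SG as [LG [DG _]].
  destruct (dense_seq _ y DG) as [xs [Hd Hx]].
  destruct (fun_choice _ Hd) as [gs Hg].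
  destruct (cauchy_K gs (Rabs M) (Rabs_pos M)) as [g Hgl].
  { intros m n. eapply Rle_trans. apply Bd. apply lin_sub; auto.
    pose proof (seq_cauchy_bound xs y Hx m n). pose proof (Rle_abs M).
    pose proof (hnorm_nonneg (hsub (xs m) (xs n))).
    eapply Rle_trans with (Rabs M * hnorm (hsub (xs m) (xs n))). nra.
    replace (Rabs M / (INR m + 1) + Rabs M / (INR n + 1)) with (Rabs M * (1 / (INR m + 1) + 1 / (INR n + 1))).
    apply Rmult_le_compat_l. apply Rabs_pos. exact H0.
    pose proof (pos_INR m). pose proof (pos_INR n). field. split; apply Rgt_not_eq; lra. }
  exists g. apply (sa_adj G); auto. intros x t Gxt.
  apply (Ccv_eq (fun n => inner t (xs n)) (fun n => inner x (gs n))).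
  apply inner_cv_r. apply seq_conv. exact Hx.
  apply inner_cv_r. exact Hgl.
  intro n. exact (sa_sym G x t (xs n) (gs n) SG Gxt (Hg n)).
Qed.

Lemma case_a_eq {H : HilbertSpace} (A G : Op H) : selfadjoint A -> selfadjoint G ->
  (forall y, dom G y) -> op_eq (adjoint (op_mul G A)) (op_mul A G).
Proof.
  intros SA SG tot y z. split.
  - intro adj. destruct (tot y) as [t Gy]. exists t. split; auto.
    apply (sa_adj A); auto. intros x u Axu. destruct (tot u) as [w Guw].
    pose proof (adj x w (ex_intro _ u (conj Axu Guw))) as E.
    rewrite (sa_sym G u w y t SG Guw Gy) in E. exact E.
  - intros [t [Gy At]] x w [u [Ax Gu]].
    rewrite (sa_sym G u w y t SG Gu Gy). exact (sa_sym A x u t z SA Ax At).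
Qed.


Lemma case_d {H : HilbertSpace} (A G : Op H) lam : selfadjoint A -> selfadjoint G ->
  in_resolvent (op_mul A G) lam -> lam <> C0 -> closed_op (op_mul G A) ->
  bounded_op (op_mul G (op_mul (op_inv (op_shift (op_mul A G) lam)) A)) ->
  in_resolvent (op_mul G A) lam.
Proof.
  intros SA SG [Inj [Sur _]] Hl0 Hcl [M Bd].
  pose proof SA as [LA [DA _]]. pose proof SG as [LG _].
  assert (LAG : is_linop (op_mul A G)) by (apply linop_mul; auto).
  assert (LGA : is_linop (op_mul G A)) by (apply linop_mul; auto).
  set (S := op_shift (op_mul A G) lam) in *.
  assert (LS : is_linop S) by (apply linop_shift; auto).
  assert (Hl : Re lam * Re lam + Im lam * Im lam <> 0).
  { intro Z. apply Hl0. apply Cmod2_zero. unfold Cmod2. lra. }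
  set (li := mkC (Re lam / (Re lam * Re lam + Im lam * Im lam)) (- Im lam / (Re lam * Re lam + Im lam * Im lam))).
  set (Pr := fun x p => exists a y s, A x a /\ S y a /\ G y s /\ p = hscal li (hsub s x)).
  assert (Ptot : forall x, dom A x -> exists p, Pr x p).
  { intros x [a Ax]. destruct (Sur a) as [y [w [[s [Gy As]] Ea]]].
    exists (hscal li (hsub s x)), a, y, s. repeat split; auto.
    exists w. split; auto. exists s. auto. }
  assert (Pshift : forall x p, Pr x p -> op_shift (op_mul G A) lam p x).
  { intros x p [a [y [s [Ax [[w [[s' [Gy' As']] Ea]] [Gy ->]]]]]].
    assert (s' = s) by (apply (lin_fun G y); auto). subst s'.
    exists s. split.
    - exists y. split; [|exact Gy].
      assert (E : hscal li (hsub w a) = y).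
      { subst a. unfold li. apply vec_ext; intro; inner_expand; apply Cext; Csimpl; field; exact Hl. }
      rewrite <- E. apply lin_scal; auto. apply lin_sub; auto.
    - unfold li. apply vec_ext; intro; inner_expand; apply Cext; Csimpl; field; exact Hl. }
  assert (Psub : forall x1 p1 x2 p2, Pr x1 p1 -> Pr x2 p2 -> Pr (hsub x1 x2) (hsub p1 p2)).
  { intros x1 p1 x2 p2 [a1 [y1 [s1 [A1 [S1 [G1 ->]]]]]] [a2 [y2 [s2 [A2 [S2 [G2 ->]]]]]].
    exists (hsub a1 a2), (hsub y1 y2), (hsub s1 s2). repeat split.
    apply lin_sub; auto. apply lin_sub; auto. apply lin_sub; auto. vec_eq. }
  set (M' := sqrt (Cmod2 li) * (Rabs M + 1)).
  assert (HM' : 0 <= M').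
  { unfold M'. pose proof (sqrt_pos (Cmod2 li)). pose proof (Rabs_pos M). nra. }
  assert (Pbd : forall x p, Pr x p -> hnorm p <= M' * hnorm x).
  { intros x p [a [y [s [Ax [Sy [Gy ->]]]]]].
    assert (Hs : hnorm s <= M * hnorm x).
    { apply Bd. exists y. split; auto. exists a. split; auto. }
    rewrite hnorm_scal. unfold M'. pose proof (hnorm_sub_le s x).
    pose proof (sqrt_pos (Cmod2 li)). pose proof (Rle_abs M). pose proof (hnorm_nonneg x).
    assert (hnorm (hsub s x) <= (Rabs M + 1) * hnorm x) by nra.
    rewrite Rmult_assoc. apply Rmult_le_compat_l; auto. }
  assert (Surj : forall y, exists p, op_shift (op_mul G A) lam p y /\ hnorm p <= M' * hnorm y).
  { intro y. destruct (dense_seq _ y DA) as [xs [Hd Hx]].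
    destruct (fun_choice _ (fun n => Ptot (xs n) (Hd n))) as [ps Hps].
    destruct (cauchy_K ps M' HM') as [p Hp].
    { intros m n. eapply Rle_trans. apply Pbd. apply Psub; apply Hps.
      pose proof (seq_cauchy_bound xs y Hx m n).
      pose proof (pos_INR m). pose proof (pos_INR n).
      replace (M' / (INR m + 1) + M' / (INR n + 1)) with (M' * (1 / (INR m + 1) + 1 / (INR n + 1)))
        by (field; split; apply Rgt_not_eq; lra).
      apply Rmult_le_compat_l; auto. }
    exists p. split.
    - assert (GAz : forall n, op_mul G A (ps n) (hadd (xs n) (hscal lam (ps n)))).
      { intro n. destruct (Pshift _ _ (Hps n)) as [w [GAw Ew]].
        replace (hadd (xs n) (hscal lam (ps n))) with w. exact GAw. rewrite Ew. vec_eq. }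
      pose proof (Hcl _ _ p (hadd y (hscal lam p)) GAz Hp
        (conv_add _ _ _ _ (seq_conv xs y Hx) (conv_scal _ _ lam Hp))) as GAp.
      exists (hadd y (hscal lam p)). split. exact GAp. vec_eq.
    - apply le_of_forall_eps. intros eps He.
      destruct (eventually_and _ _ (Hp (eps/2) ltac:(lra)) (small_inv M' (eps/2) HM' ltac:(lra))) as [N HN].
      destruct (HN N (le_n N)) as [H1 H2].
      pose proof (Pbd _ _ (Hps N)) as B.
      assert (T1 : hnorm p <= hnorm (ps N) + hnorm (hsub (ps N) p)).
      { replace p with (hadd (ps N) (hsub p (ps N))) at 1 by vec_eq. rewrite (hnorm_sub_sym (ps N) p).
        apply hnorm_triangle. }
      assert (T2 : hnorm (xs N) <= hnorm y + hnorm (hsub y (xs N))).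
      { replace (xs N) with (hadd y (hsub (xs N) y)) at 1 by vec_eq. rewrite (hnorm_sub_sym y (xs N)).
        apply hnorm_triangle. }
      pose proof (Hx N). pose proof (pos_INR N).
      assert (M' * hnorm (hsub y (xs N)) <= M' / (INR N + 1)).
      { unfold Rdiv. rewrite <- (Rmult_1_l (/ (INR N + 1))). fold (1 / (INR N + 1)).
        apply Rmult_le_compat_l; lra. }
      nra. }
  assert (InjGA : injective_op (op_shift (op_mul G A) lam)).
  { intros x1 x2 y h1 h2.
    pose proof (lin_sub _ _ _ _ _ (linop_shift _ lam LGA) h1 h2) as h.
    replace (hsub y y) with (@hzero H) in h by vec_eq.
    destruct h as [v [[a [Ad Ga]] Ev]].
    assert (Ev' : v = hscal lam (hsub x1 x2)).
    { replace v with (hadd (hsub v (hscal lam (hsub x1 x2))) (hscal lam (hsub x1 x2))) by vec_eq.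
      rewrite <- Ev. vec_eq. }
    assert (Sa : S a hzero).
    { exists (hscal lam a). split. exists v. split; auto. rewrite Ev'. apply lin_scal; auto. vec_eq. }
    assert (a = hzero) by (eapply Inj; [exact Sa| apply lin_zero; auto]). subst a.
    assert (v = hzero) by (apply (lin_fun G hzero); auto; apply lin_zero; auto).
    rewrite H0 in Ev'.
    assert (E : hsub x1 x2 = hscal li (hscal lam (hsub x1 x2))).
    { unfold li. apply vec_ext; intro; inner_expand; apply Cext; Csimpl; field; exact Hl. }
    rewrite <- Ev' in E. replace (hscal li hzero) with (@hzero H) in E by vec_eq.
    replace x1 with (hadd x2 (hsub x1 x2)) by vec_eq. rewrite E. vec_eq. }
  split; [exact InjGA|split].
  - intro y. destruct (Surj y) as [p [h _]]. exists p. exact h.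
  - exists M'. intros y x h. unfold op_inv in h. destruct (Surj y) as [p [hp Bp]].
    assert (x = p) by (eapply InjGA; eauto).
    subst. exact Bp.
Qed.

Theorem mainTheorem3 (H : HilbertSpace) (A G : Op H)
  (hA : selfadjoint A) (hG : selfadjoint G) :
  ( (bounded_op G /\ resolvent_nonempty (op_mul G A))
    \/ (boundedly_invertible G /\ resolvent_nonempty (op_mul A G))
    \/ (op_eq (adjoint (op_mul A G)) (op_mul G A) /\ resolvent_nonempty (op_mul A G))
    \/ (resolvent_nonempty (op_mul A G) /\ closed_op (op_mul G A) /\
        exists lam : Cplx, in_resolvent (op_mul A G) lam /\ lam <> C0 /\
          bounded_op (op_mul G (op_mul (op_inv (op_shift (op_mul A G) lam)) A))) ) ->
  resolvent_nonempty (op_mul A G) /\ resolvent_nonempty (op_mul G A).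
Proof.
  pose proof hA as [LA _]. pose proof hG as [LG _].
  intros [ [Gb [lam R]] | [[Gi [lam R]] | [[E [lam R]] | [[lam0 R0] [Hcl [lam [R [Hl Bd]]]]] ] ] ].
  - split; [|exists lam; exact R].
    exists (Cconj lam). apply (resolvent_eq (adjoint (op_mul G A))).
    apply case_a_eq; auto. apply bounded_total; auto.
    apply resolvent_adjoint; auto. apply linop_mul; auto.
  - split; [exists lam; exact R|].
    exists (Cconj lam). apply (resolvent_eq (adjoint (op_mul A G))).
    apply case_b_eq; auto.
    apply resolvent_adjoint; auto. apply linop_mul; auto.
  - split; [exists lam; exact R|].
    exists (Cconj lam). apply (resolvent_eq (adjoint (op_mul A G))). exact E.
    apply resolvent_adjoint; auto. apply linop_mul; auto.
  - split; [exists lam0; exact R0|].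
    exists lam. apply case_d; auto.
Qed.
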